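(* Let $d$ be a defined $n$-ary operator whose $i$-th argument position is Leibniz, for some $i\in\{1,\ldots,n\}$. Let $e_1,\ldots,e_n$ be any expressions, $\mathcal{M}$ a Kripke model, $w$ a state, and $x$ a rigid variable not occurring free in any $e_j$. Then $$[\![d(e_1,\ldots,e_n)]\!]^\mathcal{M}_w=[\![d(e_1,\ldots,e_{i-1},x,e_{i+1},\ldots,e_n)]\!]^{\mathcal{M}'}_w,$$ where $\mathcal{M}'$ agrees with $\mathcal{M}$ except that its valuation of rigid variables maps $x$ to $[\![e_i]\!]^\mathcal{M}_w$.
   Context: FOML syntax. Fix disjoint, non-empty, denumerable sets $\mathcal{X}$ (rigid variables), $\mathcal{V}$ (flexible variables) and $\mathcal{O}$ (operator symbols with arities). Expressions are given by $e ::= x \mid v \mid op(e,\ldots,e) \mid e=e \mid \mathrm{FALSE} \mid e\Rightarrow e \mid \forall x:e \mid \nabla e \mid d(e,\ldots,e)$, where $d$ ranges over defined operators. Only rigid variables are bound. Operator definitions. A definition has the form $d(x_1,\ldots,x_n)\triangleq e$, where: - $d$ is a fresh symbol; - $x_1,\ldots,x_n$ are pairwise distinct rigid variables; - $e$ is an expression, possibly using flexible variables and previously defined operators, whose free rigid variables are among $x_1,\ldots,x_n$. Leibniz argument positions. These are defined inductively. - All argument positions of operators in $\mathcal{O}$, and of all connectives other than $\nabla$ (that is, $=$, $\Rightarrow$, $\forall$), are Leibniz. The argument position of $\nabla$ is not Leibniz. - For $d(x_1,\ldots,x_n)\triangleq e$, the $i$-th argument position of $d$ is Leibniz iff $x_i$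 does not occur within a non-Leibniz argument position in $e$. Semantics. A Kripke model is $\mathcal{M}=(\mathcal{I},\xi,\mathcal{W},R,\zeta,\nabla_\mathcal{M})$, where: - $\mathcal{I}$ is a first-order interpretation with distinct values $\mathsf{tt},\mathsf{ff}$ in its universe; - $\xi:\mathcal{X}\to|\mathcal{I}|$; - $\mathcal{W}$ is a non-empty set of states and $R\subseteq\mathcal{W}^2$; - $\zeta:\mathcal{V}\times\mathcal{W}\to|\mathcal{I}|$; - $\nabla_\mathcal{M}:2^{|\mathcal{I}|}\to|\mathcal{I}|$ satisfies $\nabla_\mathcal{M}(S)=\mathsf{tt}$ iff $S\subseteq\{\mathsf{tt}\}$. Values are defined as follows. - $[\![x]\!]_w=\xi(x)$ and $[\![v]\!]_w=\zeta(v,w)$. - $[\![op(\vec e)]\!]_w=\mathcal{I}(op)(\ldots)$. - $[\![e_1=e_2]\!]_w$ is $\mathsf{tt}$ iff the values are equal, and $\mathsf{ff}$ otherwise. - $[\![\mathrm{FALSE}]\!]_w=\mathsf{ff}$. - $[\![\varphi\Rightarrow\psi]\!]_w=\mathsf{tt}$ iff $[\![\varphi]\!]_w\ne\mathsf{tt}$ or $[\![\psi]\!]_w=\mathsf{tt}$, and $\mathsf{ff}$ otherwise. - $\forall$ quantifies over the rigid variable valuation only, as usual. - $[\![\nabla\varphi]\!]_w=\nabla_\mathcal{M}(\{[\![\varphi]\!]_{w'}:(w,w')\in R\})$. - For $d(x_1,\ldots,x_n)\triangleq e$, $[\![d(e_1,\ldots,e_n)]\!]^\mathcal{M}_w=[\![e[e_1/x_1,\ldots,e_n/x_n]]\!]^\mathcal{M}_w$,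 using capture-avoiding substitution. *)

(* Defs.v *)
From Stdlib Require Import List Arith.
Import ListNotations.

(* A defined operator
   is referred to by its index in a definition list [defs]. *)
Inductive expr : Type :=
| ERigid (x : nat)
| EFlex (v : nat)
| EOp (o : nat) (args : list expr)
| EEq (a b : expr)
| EFalse
| EImp (a b : expr)
| EAll (x : nat) (body : expr)
| ENabla (a : expr)
| EDef (d : nat) (args : list expr).

Fixpoint fv (e : expr) : list nat :=
  match e with
  | ERigid x => [x]
  | EFlex _ => []
  | EOp _ args => flat_map fv args
  | EEq a b => fv a ++ fv b
  | EFalse => []
  | EImp a b => fv a ++ fv b
  | EAll x b => filter (fun y => negb (Nat.eqb y x)) (fv b)
  | ENabla a => fv a
  | EDef _ args => flat_map fv args
  end.

Definition memb (x : nat) (l : list nat) : bool := existsb (Nat.eqb x) l.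

Definition fresh (l : list nat) : nat := S (list_max l).

Fixpoint lookup (x : nat) (s : list (nat * expr)) : option expr :=
  match s with
  | [] => None
  | (y, a) :: s' => if Nat.eqb x y then Some a else lookup x s'
  end.

Definition remove_key (x : nat) (s : list (nat * expr)) : list (nat * expr) :=
  filter (fun p => negb (Nat.eqb (fst p) x)) s.

Fixpoint subst (s : list (nat * expr)) (e : expr) : expr :=
  match e with
  | ERigid y => match lookup y s with Some a => a | None => ERigid y end
  | EFlex v => EFlex v
  | EOp o args => EOp o (map (subst s) args)
  | EEq a b => EEq (subst s a) (subst s b)
  | EFalse => EFalse
  | EImp a b => EImp (subst s a) (subst s b)
  | EAll y b =>
      let s' := remove_key y s in
      if existsb (fun p => memb y (fv (snd p))) s' then
        let z := fresh (y :: fv b ++ map fst s' ++ flat_map (fun p => fv (snd p)) s') in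
        EAll z (subst ((y, ERigid z) :: s') b)
      else EAll y (subst s' b)
  | ENabla a => ENabla (subst s a)
  | EDef d args => EDef d (map (subst s) args)
  end.

(* A definition d(x_1,...,x_n) == body is stored as (params, body). *)
Definition defn := (list nat * expr)%type.

Fixpoint wf_expr (defs : list defn) (k : nat) (e : expr) : Prop :=
  match e with
  | ERigid _ | EFlex _ | EFalse => True
  | EOp _ args => fold_right (fun a P => wf_expr defs k a /\ P) True args
  | EEq a b | EImp a b => wf_expr defs k a /\ wf_expr defs k b
  | EAll _ b => wf_expr defs k b
  | ENabla a => wf_expr defs k a
  | EDef d args =>
      d < k /\
      (exists ps b, nth_error defs d = Some (ps, b) /\ length ps = length args) /\
      fold_right (fun a P => wf_expr defs k a /\ P) True args
  end.

Definition wf_defs (defs : list defn) : Prop :=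
  forall k ps b, nth_error defs k = Some (ps, b) ->
    NoDup ps /\ (forall y, In y (fv b) -> In y ps) /\ wf_expr defs k b.

(* [occurs_nonL leib x e]: the rigid variable x occurs (free) within a
   non-Leibniz argument position in e, where [leib d j] says that the j-th
   (0-based) argument position of defined operator d is Leibniz. *)
Fixpoint occurs_nonL (leib : nat -> nat -> Prop) (x : nat) (e : expr) : Prop :=
  match e with
  | ERigid _ | EFlex _ | EFalse => False
  | EOp _ args => fold_right (fun a P => occurs_nonL leib x a \/ P) False args
  | EEq a b | EImp a b => occurs_nonL leib x a \/ occurs_nonL leib x b
  | EAll y b => y <> x /\ occurs_nonL leib x b
  | ENabla a => In x (fv a)
  | EDef d args =>
      (fix go (j : nat) (l : list expr) : Prop :=
         match l with
         | [] => False
         | a :: l' => ((~ leib d j /\ In x (fv a)) \/ occurs_nonL leib x a)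
                      \/ go (S j) l'
         end) 0 args
  end.

Fixpoint leibF (defs : list defn) (k : nat) : nat -> nat -> Prop :=
  match k with
  | 0 => fun _ _ => False
  | S k' => fun d j =>
      if d <? k' then leibF defs k' d j
      else if d =? k' then
        match nth_error defs k' with
        | Some (ps, b) => j < length ps /\ ~ occurs_nonL (leibF defs k') (nth j ps 0) b
        | None => False
        end
      else False
  end.

(* the j-th (0-based) argument position of defined operator d is Leibniz *)
Definition leibniz (defs : list defn) (d j : nat) : Prop :=
  leibF defs (length defs) d j.

(* Kripke models, without the rigid valuation xi (passed separately). *)
Record kmodel := {
  U : Type;
  tt : U;
  ff : U;
  tt_neq_ff : tt <> ff;
  Iop : nat -> list U -> U;
  W : Type;
  W_inhabited : inhabited W;
  R : W -> W -> Prop;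
  zeta : nat -> W -> U;
  nab : (U -> Prop) -> U;
  nab_spec : forall S : U -> Prop, nab S = tt <-> (forall u, S u -> u = tt)
}.

Definition upd {A : Type} (xi : nat -> A) (x : nat) (u : A) : nat -> A :=
  fun y => if Nat.eqb y x then u else xi y.

(* V is the valuation [[e]]_w^{(M,xi)} written V xi w e: it satisfies the
   defining clauses of the semantics. *)
Definition is_semantics (M : kmodel) (defs : list defn)
    (V : (nat -> U M) -> W M -> expr -> U M) : Prop :=
  forall (xi : nat -> U M) (w : W M),
    (forall x, V xi w (ERigid x) = xi x) /\
    (forall v, V xi w (EFlex v) = zeta M v w) /\
    (forall o args, V xi w (EOp o args) = Iop M o (map (V xi w) args)) /\
    (forall a b, V xi w a = V xi w b -> V xi w (EEq a b) = tt M) /\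
    (forall a b, V xi w a <> V xi w b -> V xi w (EEq a b) = ff M) /\
    V xi w EFalse = ff M /\
    (forall a b, (V xi w a <> tt M \/ V xi w b = tt M) -> V xi w (EImp a b) = tt M) /\
    (forall a b, ~ (V xi w a <> tt M \/ V xi w b = tt M) -> V xi w (EImp a b) = ff M) /\
    (forall x b, (forall u, V (upd xi x u) w b = tt M) -> V xi w (EAll x b) = tt M) /\
    (forall x b, ~ (forall u, V (upd xi x u) w b = tt M) -> V xi w (EAll x b) = ff M) /\
    (forall a, V xi w (ENabla a) = nab M (fun u => exists w', R M w w' /\ V xi w' a = u)) /\
    (forall d ps b args, nth_error defs d = Some (ps, b) -> length args = length ps ->
       V xi w (EDef d args) = V xi w (subst (combine ps args) b)).

(* Main.v *)
Require Import Defs.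
From Stdlib Require Import List Arith Lia Classical ClassicalEpsilon FunctionalExtensionality PropExtensionality.
Import ListNotations.

Definition expr_ind' (P : expr -> Prop)
  (HR : forall x, P (ERigid x)) (HF : forall v, P (EFlex v))
  (HO : forall o args, Forall P args -> P (EOp o args))
  (HE : forall a b, P a -> P b -> P (EEq a b)) (HFa : P EFalse)
  (HI : forall a b, P a -> P b -> P (EImp a b))
  (HA : forall x b, P b -> P (EAll x b)) (HN : forall a, P a -> P (ENabla a))
  (HD : forall d args, Forall P args -> P (EDef d args)) : forall e, P e :=
  fix F e := match e with
  | ERigid x => HR x | EFlex v => HF v
  | EOp o args => HO o args ((fix G l := match l return Forall P l with
       | [] => Forall_nil _ | a :: l' => Forall_cons _ (F a) (G l') end) args)
  | EEq a b => HE a b (F a) (F b) | EFalse => HFa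
  | EImp a b => HI a b (F a) (F b) | EAll x b => HA x b (F b)
  | ENabla a => HN a (F a)
  | EDef d args => HD d args ((fix G l := match l return Forall P l with
       | [] => Forall_nil _ | a :: l' => Forall_cons _ (F a) (G l') end) args)
  end.

Fixpoint lookupA {A} (z : nat) (l : list (nat * A)) : option A :=
  match l with [] => None | (y, a) :: l' => if Nat.eqb z y then Some a else lookupA z l' end.

Lemma lookup_A z s : lookup z s = lookupA z s.
Proof. induction s as [|[y a] s IH]; simpl; auto. rewrite IH; auto. Qed.

Lemma lookupA_in {A} z (l : list (nat*A)) a : lookupA z l = Some a -> In (z, a) l.
Proof. induction l as [|[y b] l IH]; simpl; try discriminate.
  destruct (Nat.eqb_spec z y); intros H; [inversion H; subst; auto | auto]. Qed.

Lemma lookupA_combine_map {A B} (f : A -> B) z ps (l : list A) :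
  lookupA z (combine ps (map f l)) = option_map f (lookupA z (combine ps l)).
Proof. revert l; induction ps as [|p ps IH]; intros [|a l]; simpl; auto.
  destruct (z =? p); auto. Qed.

Lemma lookupA_combine_nth {A} z ps (l : list A) a :
  lookupA z (combine ps l) = Some a -> exists j, j < length ps /\ nth j ps 0 = z /\ nth_error l j = Some a.
Proof. revert l; induction ps as [|p ps IH]; intros [|b l]; simpl; try discriminate.
  destruct (Nat.eqb_spec z p) as [->|]; intros H.
  - inversion H; subst. exists 0; simpl; repeat split; auto; lia.
  - destruct (IH _ H) as (j & ? & ? & ?). exists (S j); simpl; repeat split; auto; lia. Qed.

Lemma lookupA_combine_nodup {A} ps (l : list A) j dflt :
  NoDup ps -> j < length ps -> length l = length ps ->
  lookupA (nth j ps 0) (combine ps l) = Some (nth j l dflt).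
Proof. revert l j; induction ps as [|p ps IH]; intros [|b l] j Hnd Hj Hl; simpl in *; try lia.
  inversion Hnd; subst. destruct j as [|j]; simpl.
  - rewrite Nat.eqb_refl; auto.
  - destruct (Nat.eqb_spec (nth j ps 0) p) as [E|].
    + exfalso. apply H1. rewrite <- E. apply nth_In; lia.
    + apply IH; auto; lia. Qed.

Lemma lookupA_combine_some {A} ps (l : list A) z :
  In z ps -> length l = length ps -> exists a, lookupA z (combine ps l) = Some a.
Proof. revert l; induction ps as [|p ps IH]; intros [|b l] Hz Hl; simpl in *; try lia; try tauto.
  destruct (Nat.eqb_spec z p); eauto. destruct Hz as [->|Hz]; [congruence|]. apply IH; auto. Qed.
Section Sem.
Variable defs : list defn.
Variable M : kmodel.

Definition envOf (ps : list nat) (dens : list (W M -> U M)) (z : nat) : W M -> U M :=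
  match lookupA z (combine ps dens) with Some f => f | None => fun _ => tt M end.

Fixpoint De (Db : nat -> list (W M -> U M) -> W M -> U M)
  (rho : nat -> W M -> U M) (w : W M) (e : expr) {struct e} : U M :=
  match e with
  | ERigid y => rho y w
  | EFlex v => zeta M v w
  | EOp o args => Iop M o (map (De Db rho w) args)
  | EEq a b => if excluded_middle_informative (De Db rho w a = De Db rho w b) then tt M else ff M
  | EFalse => ff M
  | EImp a b => if excluded_middle_informative (De Db rho w a <> tt M \/ De Db rho w b = tt M) then tt M else ff M
  | EAll y b => if excluded_middle_informative (forall u, De Db (upd rho y (fun _ => u)) w b = tt M) then tt M else ff M
  | ENabla a => nab M (fun u => exists w', R M w w' /\ De Db rho w' a = u)
  | EDef d args => Db d (map (fun a w' => De Db rho w' a) args) w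
  end.

Fixpoint D (n : nat) : nat -> list (W M -> U M) -> W M -> U M :=
  fun d dens w => match n with
  | 0 => tt M
  | S n' => match nth_error defs d with
            | Some (ps, b) => De (D n') (envOf ps dens) w b
            | None => tt M end
  end.

Lemma leibF_unfold m d j : leibF defs m d j -> d < m /\ exists ps b, nth_error defs d = Some (ps, b) /\
  j < length ps /\ ~ occurs_nonL (leibF defs d) (nth j ps 0) b.
Proof. induction m as [|m IH]; simpl; [tauto|].
  destruct (Nat.ltb_spec d m).
  - intros H'. destruct (IH H') as [? ?]. split; auto.
  - destruct (Nat.eqb_spec d m) as [->|]; [|tauto].
    destruct (nth_error defs m) as [[ps b]|] eqn:E; [|tauto].
    intros [? ?]. split; [lia|]. eauto 6. Qed.

Lemma occ_op leib x o args a : In a args -> occurs_nonL leib x a -> occurs_nonL leib x (EOp o args).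
Proof. intros Hin Ho. change (fold_right (fun a P => occurs_nonL leib x a \/ P) False args).
  induction args; [destruct Hin|]; simpl in *; destruct Hin as [->|H]; auto. Qed.

Definition go (leib : nat -> nat -> Prop) x d :=
  fix g (j : nat) (l : list expr) : Prop :=
  match l with
  | [] => False
  | a :: l' => ((~ leib d j /\ In x (fv a)) \/ occurs_nonL leib x a) \/ g (S j) l'
  end.

Lemma go_nth leib x d args : forall j j0 a, nth_error args j = Some a ->
  ((~ leib d (j0 + j) /\ In x (fv a)) \/ occurs_nonL leib x a) -> go leib x d j0 args.
Proof. induction args as [|b args IH]; intros j j0 a Hn H; destruct j; simpl in *; try discriminate.
  - inversion Hn; subst. left. rewrite Nat.add_0_r in H. auto.
  - right. apply (IH j (S j0) a); auto. replace (S j0 + j) with (j0 + S j) by lia. auto.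
Qed.

Lemma occ_def leib x d args j a : nth_error args j = Some a ->
  ((~ leib d j /\ In x (fv a)) \/ occurs_nonL leib x a) -> occurs_nonL leib x (EDef d args).
Proof. intros Hn H. change (go leib x d 0 args). apply (go_nth _ _ _ _ j 0 a); auto. Qed.

Lemma D_ext n : forall e m rho rho' w,
  (forall z, In z (fv e) -> rho z = rho' z \/ (rho z w = rho' z w /\ ~ occurs_nonL (leibF defs m) z e)) ->
  De (D n) rho w e = De (D n) rho' w e.
Proof.
  induction n as [|n IHn]; intros e; induction e as [y|v|o args IHa|a b IHa IHb| |a b IHa IHb|y b IHb|a IHa|d args IHa] using expr_ind';
    intros m rho rho' w H; cbn [De].
  all: try (destruct (H y (or_introl eq_refl)) as [E|[E _]]; [rewrite E|]; auto; fail).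
  all: try reflexivity.
  all: try (f_equal; apply map_ext_in; intros a Ha; rewrite Forall_forall in IHa;
    apply (IHa a Ha m); intros z Hz;
    destruct (H z (proj2 (in_flat_map _ _ _) (ex_intro _ a (conj Ha Hz)))) as [E|[E Hn]]; auto;
    right; split; auto; intro Ho; apply Hn; eapply occ_op; eauto; fail).
  all: try (assert (E1 : De (D _) rho w a = De (D _) rho' w a) by
      (apply (IHa m); intros z Hz; destruct (H z) as [E|[E Hn]]; [simpl; apply in_or_app; auto|auto|];
       right; split; auto; intro; apply Hn; simpl; auto);
    assert (E2 : De (D _) rho w b = De (D _) rho' w b) by
      (apply (IHb m); intros z Hz; destruct (H z) as [E|[E Hn]]; [simpl; apply in_or_app; auto|auto|];
       right; split; auto; intro; apply Hn; simpl; auto);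
    rewrite E1, E2; reflexivity).
  all: try (
    assert (Hb : forall u, De (D _) (upd rho y (fun _ => u)) w b = De (D _) (upd rho' y (fun _ => u)) w b) by
      (intros u; apply (IHb m); intros z Hz; unfold upd; destruct (Nat.eqb_spec z y); [left; auto|];
       destruct (H z) as [E|[E Hn]]; [simpl; apply filter_In; split; auto; apply Bool.negb_true_iff, Nat.eqb_neq; auto|auto|];
       right; split; auto; intro; apply Hn; simpl; auto);
    destruct (excluded_middle_informative (forall u, De (D _) (upd rho y (fun _ => u)) w b = tt M)) as [h1|h1];
    destruct (excluded_middle_informative (forall u, De (D _) (upd rho' y (fun _ => u)) w b = tt M)) as [h2|h2]; auto;
    exfalso; [apply h2; intros u; rewrite <- Hb; auto | apply h1; intros u; rewrite Hb; auto]).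
  all: try (f_equal; apply functional_extensionality; intros u; apply propositional_extensionality;
    assert (Ha : forall w', De (D _) rho w' a = De (D _) rho' w' a) by
      (intros w'; apply (IHa m); intros z Hz; destruct (H z Hz) as [E|[E Hn]]; auto; exfalso; apply Hn; exact Hz);
    split; intros [w' [Hr He]]; exists w'; rewrite ?Ha in *; auto; rewrite <- Ha; auto).
  cbn [D].
  destruct (nth_error defs d) as [[ps b]|] eqn:Hd; auto.
  apply (IHn b d). intros z Hz. unfold envOf. rewrite !lookupA_combine_map.
  destruct (lookupA z (combine ps args)) as [a|] eqn:Hl; simpl; [|left; auto].
  destruct (lookupA_combine_nth _ _ _ _ Hl) as (j & Hj & Hpj & Hnj).
  assert (Ha : In a args) by (eapply nth_error_In; eauto).
  rewrite Forall_forall in IHa. specialize (IHa a Ha).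
  destruct (classic (forall z', In z' (fv a) -> rho z' = rho' z')) as [Hall|Hnall].
  - left. apply functional_extensionality; intros w'. apply (IHa m). intros; left; auto.
  - apply not_all_ex_not in Hnall as [z' Hz']. apply imply_to_and in Hz' as [Hz'1 Hz'2].
    assert (Hz'3 : In z' (fv (EDef d args))) by (simpl; apply in_flat_map; eauto).
    destruct (H z' Hz'3) as [E|[_ Hno]]; [contradiction|].
    assert (Hl' : leibF defs m d j).
    { apply NNPP; intro Hnl. apply Hno. eapply occ_def; eauto. }
    destruct (leibF_unfold _ _ _ Hl') as [_ (ps0 & b0 & Hd0 & Hj0 & Hnocc)].
    rewrite Hd in Hd0; inversion Hd0; subst ps0 b0.
    right. split.
    + apply (IHa m). intros z'' Hz''. destruct (H z'') as [E|[E2 Hno2]].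
      * simpl; apply in_flat_map; eauto.
      * left; auto.
      * right; split; auto. intro; apply Hno2; eapply occ_def; eauto.
    + rewrite <- Hpj. exact Hnocc.
Qed.

Lemma D_coinc n e rho rho' w : (forall z, In z (fv e) -> rho z = rho' z) ->
  De (D n) rho w e = De (D n) rho' w e.
Proof. intros H. apply (D_ext n e 0). intros; left; auto. Qed.

Lemma fresh_notin y l : In y l -> fresh l <> y.
Proof. intros H E. unfold fresh in E.
  assert (Hf : Forall (fun k => k <= list_max l) l) by (apply list_max_le; lia).
  rewrite Forall_forall in Hf. specialize (Hf y H). lia. Qed.

Lemma lookup_remove z y s : z <> y -> lookup z (remove_key y s) = lookup z s.
Proof. intros Hzy. induction s as [|[k a] s IH]; simpl; auto.
  destruct (Nat.eqb_spec k y) as [->|]; simpl.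
  - destruct (Nat.eqb_spec z y); [congruence|auto].
  - destruct (z =? k); auto. Qed.

Lemma lookup_in z s a : lookup z s = Some a -> In (z, a) s.
Proof. rewrite lookup_A. apply lookupA_in. Qed.

Lemma subst_nil e : subst [] e = e.
Proof. induction e using expr_ind'; simpl; f_equal; auto;
  try (rewrite Forall_forall in H; induction args; simpl in *; auto; f_equal; auto; fail). Qed.

Lemma fv_subst e : forall s z, In z (fv e) ->
  match lookup z s with
  | Some a => forall v, In v (fv a) -> In v (fv (subst s e))
  | None => In z (fv (subst s e)) end.
Proof.
  induction e as [y|v|o args IHa|a b IHa IHb| |a b IHa IHb|y b IHb|a IHa|d args IHa] using expr_ind';
    intros s z Hz; simpl in Hz; try tauto.
  - destruct Hz as [->|[]]. simpl. destruct (lookup z s); simpl; auto.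
  - apply in_flat_map in Hz as [a [Ha Hz]]. rewrite Forall_forall in IHa.
    specialize (IHa a Ha s z Hz). simpl. destruct (lookup z s); [intros v Hv; specialize (IHa v Hv)|];
    apply in_flat_map; exists (subst s a); split; auto; apply in_map; auto.
  - simpl. apply in_app_or in Hz as [Hz|Hz]; [specialize (IHa s z Hz)|specialize (IHb s z Hz)];
    destruct (lookup z s); try intros v Hv; apply in_or_app; auto.
  - simpl. apply in_app_or in Hz as [Hz|Hz]; [specialize (IHa s z Hz)|specialize (IHb s z Hz)];
    destruct (lookup z s); try intros v Hv; apply in_or_app; auto.
  - apply filter_In in Hz as [Hz Hzy]. apply Bool.negb_true_iff, Nat.eqb_neq in Hzy.
    simpl. destruct (existsb _ _) eqn:Hex.
    + set (zz := fresh _).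
      specialize (IHb ((y, ERigid zz) :: remove_key y s) z Hz). simpl in IHb.
      rewrite (proj2 (Nat.eqb_neq _ _) Hzy), lookup_remove in IHb by auto.
      destruct (lookup z s) as [a|] eqn:Hl.
      * intros v Hv. simpl. apply filter_In. split; [apply IHb; auto|].
        apply Bool.negb_true_iff, Nat.eqb_neq. apply not_eq_sym. apply fresh_notin.
        right. apply in_or_app; right. apply in_or_app; right. apply in_flat_map.
        exists (z, a). split; auto. apply filter_In. split; [apply lookup_in; auto|].
        simpl. apply Bool.negb_true_iff, Nat.eqb_neq; auto.
      * simpl. apply filter_In. split; auto.
        apply Bool.negb_true_iff, Nat.eqb_neq. apply not_eq_sym. apply fresh_notin.
        right. apply in_or_app; left; auto.
    + specialize (IHb (remove_key y s) z Hz). rewrite lookup_remove in IHb by auto.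
      destruct (lookup z s) as [a|] eqn:Hl.
      * intros v Hv. simpl. apply filter_In. split; [apply IHb; auto|].
        apply Bool.negb_true_iff, Nat.eqb_neq. intros ->.
        assert (Hin : In (z, a) (remove_key y s)).
        { apply filter_In. split; [apply lookup_in; auto|]. simpl. apply Bool.negb_true_iff, Nat.eqb_neq; auto. }
        enough (existsb (fun p => memb y (fv (snd p))) (remove_key y s) = true) by congruence.
        apply existsb_exists. exists (z, a). split; auto. simpl. unfold memb.
        apply existsb_exists. exists y. split; auto. apply Nat.eqb_refl.
      * simpl. apply filter_In. split; auto. apply Bool.negb_true_iff, Nat.eqb_neq; auto.
  - simpl. apply IHa; auto.
  - apply in_flat_map in Hz as [a [Ha Hz]]. rewrite Forall_forall in IHa.
    specialize (IHa a Ha s z Hz). simpl. destruct (lookup z s); [intros v Hv; specialize (IHa v Hv)|];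
    apply in_flat_map; exists (subst s a); split; auto; apply in_map; auto.
Qed.

Lemma lookup_remove_eq y s : lookup y (remove_key y s) = None.
Proof. induction s as [|[k a] s IH]; simpl; auto.
  destruct (Nat.eqb_spec k y) as [->|]; simpl; auto.
  destruct (Nat.eqb_spec y k); [congruence|auto]. Qed.

Lemma lookup_remove_some y' y s a : lookup y' (remove_key y s) = Some a -> lookup y' s = Some a /\ y' <> y.
Proof. destruct (Nat.eqb_spec y' y) as [->|Hn].
  - rewrite lookup_remove_eq; discriminate.
  - rewrite lookup_remove; auto. Qed.

Lemma fold_and {A} (Q : A -> Prop) l : fold_right (fun a P => Q a /\ P) True l -> forall a, In a l -> Q a.
Proof. induction l; simpl; intros H b Hb; [tauto|]. destruct H, Hb as [->|]; auto. Qed.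

Lemma if_ext (P Q : Prop) : (P <-> Q) ->
  (if excluded_middle_informative P then tt M else ff M) = (if excluded_middle_informative Q then tt M else ff M).
Proof. intros H. destruct (excluded_middle_informative P), (excluded_middle_informative Q); tauto. Qed.

Variable V : (nat -> U M) -> W M -> expr -> U M.
Hypothesis HV : is_semantics M defs V.
Hypothesis Hdefs : wf_defs defs.

Ltac hv xi w := destruct (HV xi w) as (h1&h2&h3&h4&h5&h6&h7&h8&h9&h10&h11&h12).

Lemma V_rigid xi w y : V xi w (ERigid y) = xi y.
Proof. hv xi w; auto. Qed.
Lemma V_flex xi w v : V xi w (EFlex v) = zeta M v w.
Proof. hv xi w; auto. Qed.
Lemma V_op xi w o args : V xi w (EOp o args) = Iop M o (map (V xi w) args).
Proof. hv xi w; auto. Qed.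
Lemma V_false xi w : V xi w EFalse = ff M.
Proof. hv xi w; auto. Qed.
Lemma V_eq xi w a b : V xi w (EEq a b) = if excluded_middle_informative (V xi w a = V xi w b) then tt M else ff M.
Proof. hv xi w; destruct excluded_middle_informative; auto. Qed.
Lemma V_imp xi w a b : V xi w (EImp a b) = if excluded_middle_informative (V xi w a <> tt M \/ V xi w b = tt M) then tt M else ff M.
Proof. hv xi w; destruct excluded_middle_informative; auto. Qed.
Lemma V_all xi w y b : V xi w (EAll y b) = if excluded_middle_informative (forall u, V (upd xi y u) w b = tt M) then tt M else ff M.
Proof. hv xi w; destruct excluded_middle_informative; auto. Qed.
Lemma V_nab xi w a : V xi w (ENabla a) = nab M (fun u => exists w', R M w w' /\ V xi w' a = u).
Proof. hv xi w; auto. Qed.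
Lemma V_def xi w d ps b args : nth_error defs d = Some (ps, b) -> length args = length ps ->
  V xi w (EDef d args) = V xi w (subst (combine ps args) b).
Proof. hv xi w; auto. Qed.

Definition env (s : list (nat * expr)) (xi : nat -> U M) (z : nat) : W M -> U M :=
  match lookup z s with Some a => fun w' => V xi w' a | None => fun _ => xi z end.

Definition Cx (a : expr) := forall xi xi' w, (forall z, In z (fv a) -> xi z = xi' z) -> V xi w a = V xi' w a.

Lemma Q k : forall e, wf_expr defs k e -> forall n, k <= n -> forall s,
  (forall y a, lookup y s = Some a -> Cx a) -> forall xi w,
  V xi w (subst s e) = De (D n) (env s xi) w e.
Proof.
  induction k as [k IHk] using (well_founded_induction lt_wf).
  intros e; induction e as [y|v|o args IHa|a b IHa IHb| |a b IHa IHb|y b IHb|a IHa|d args IHa] using expr_ind';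
    intros Hwf n Hkn s Hs xi w; cbn [De].
  - simpl. unfold env. destruct (lookup y s); auto. apply V_rigid.
  - simpl. apply V_flex.
  - simpl. rewrite V_op, map_map. f_equal. apply map_ext_in. intros a Ha.
    rewrite Forall_forall in IHa. apply IHa; auto. apply (fold_and (wf_expr defs k) args); auto.
  - simpl in Hwf |- *. rewrite V_eq, (IHa (proj1 Hwf) n Hkn s Hs), (IHb (proj2 Hwf) n Hkn s Hs). reflexivity.
  - simpl. apply V_false.
  - simpl in Hwf |- *. rewrite V_imp, (IHa (proj1 Hwf) n Hkn s Hs), (IHb (proj2 Hwf) n Hkn s Hs). reflexivity.
  - simpl in Hwf. cbn [subst]. cbv zeta. destruct (existsb _ _) eqn:Hex.
    + set (zz := fresh _). rewrite V_all. apply if_ext.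
      assert (Hpt : forall u, V (upd xi zz u) w (subst ((y, ERigid zz) :: remove_key y s) b) =
                         De (D n) (upd (env s xi) y (fun _ => u)) w b).
      { intros u. rewrite (IHb Hwf n Hkn); auto.
        - apply D_coinc. intros z Hz. unfold env, upd. simpl.
          destruct (Nat.eqb_spec z y) as [->|Hzy].
          + apply functional_extensionality; intros w'. rewrite V_rigid. unfold upd. rewrite Nat.eqb_refl. auto.
          + rewrite lookup_remove by auto. destruct (lookup z s) as [a|] eqn:Hl.
            * apply functional_extensionality; intros w'. apply (Hs z a Hl).
              intros z' Hz'. destruct (Nat.eqb_spec z' zz) as [->|]; auto. exfalso.
              apply (fresh_notin zz (y :: fv b ++ map fst (remove_key y s) ++
                      flat_map (fun p => fv (snd p)) (remove_key y s))); [|reflexivity].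
              right. apply in_or_app; right. apply in_or_app; right. apply in_flat_map.
              exists (z, a). split; auto. apply filter_In. split; [apply lookup_in; auto|].
              simpl. apply Bool.negb_true_iff, Nat.eqb_neq; auto.
            * destruct (Nat.eqb_spec z zz) as [->|]; auto. exfalso.
              apply (fresh_notin zz (y :: fv b ++ map fst (remove_key y s) ++
                      flat_map (fun p => fv (snd p)) (remove_key y s))); [|reflexivity].
              right. apply in_or_app; left; auto.
        - intros y' a Hl. simpl in Hl. destruct (Nat.eqb_spec y' y).
          + inversion Hl; subst. intros xi1 xi2 w1 H. rewrite !V_rigid. apply H. simpl; auto.
          + apply lookup_remove_some in Hl as [Hl _]. eauto. }
      split; intros H u; [rewrite <- Hpt|rewrite Hpt]; auto.
    + rewrite V_all. apply if_ext.
      assert (Hpt : forall u, V (upd xi y u) w (subst (remove_key y s) b) =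
                         De (D n) (upd (env s xi) y (fun _ => u)) w b).
      { intros u. rewrite (IHb Hwf n Hkn); auto.
        - apply D_coinc. intros z Hz. unfold env, upd.
          destruct (Nat.eqb_spec z y) as [->|Hzy].
          + rewrite lookup_remove_eq. auto.
          + rewrite lookup_remove by auto. destruct (lookup z s) as [a|] eqn:Hl.
            * apply functional_extensionality; intros w'. apply (Hs z a Hl).
              intros z' Hz'. destruct (Nat.eqb_spec z' y) as [->|]; auto. exfalso.
              enough (existsb (fun p => memb y (fv (snd p))) (remove_key y s) = true) by congruence.
              apply existsb_exists. exists (z, a). split.
              { apply filter_In. split; [apply lookup_in; auto|]. simpl. apply Bool.negb_true_iff, Nat.eqb_neq; auto. }
              simpl. unfold memb. apply existsb_exists. exists y. split; auto. apply Nat.eqb_refl.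
            * destruct (Nat.eqb_spec z y); [contradiction|auto].
        - intros y' a Hl. apply lookup_remove_some in Hl as [Hl _]. eauto. }
      split; intros H u; [rewrite <- Hpt|rewrite Hpt]; auto.
  - simpl in Hwf |- *. rewrite V_nab. f_equal. apply functional_extensionality; intros u.
    apply propositional_extensionality. split; intros [w' [Hr He]]; exists w'; split; auto;
    rewrite <- He; [symmetry|]; apply IHa; auto.
  - simpl in Hwf. destruct Hwf as (Hdk & (ps & b & Hd & Hlen) & Hwfa).
    destruct n as [|n']; [lia|]. cbn [D]. rewrite Hd. simpl subst.
    rewrite Forall_forall in IHa.
    assert (IHa' : forall a, In a args -> forall s xi w, (forall y a, lookup y s = Some a -> Cx a) ->
       V xi w (subst s a) = De (D (S n')) (env s xi) w a).
    { intros a Ha s0 xi0 w0 Hs0. apply IHa; auto. apply (fold_and (wf_expr defs k) args); auto. }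
    destruct (Hdefs d ps b Hd) as (Hnd & Hfvb & Hwfb).
    rewrite (V_def _ _ _ ps b) by (auto; rewrite length_map; auto).
    rewrite (IHk d Hdk b Hwfb n' ltac:(lia)).
    + apply D_coinc. intros z Hz. unfold env, envOf. rewrite lookup_A, !lookupA_combine_map.
      destruct (lookupA_combine_some ps args z (Hfvb z Hz) (eq_sym Hlen)) as [a Ha].
      rewrite Ha. simpl. apply functional_extensionality; intros w'.
      apply IHa'; auto. apply lookupA_in in Ha. apply in_combine_r in Ha. auto.
    + intros y a' Hl. rewrite lookup_A, lookupA_combine_map in Hl.
      destruct (lookupA y (combine ps args)) as [a|] eqn:Ha; simpl in Hl; [|discriminate].
      inversion Hl; subst a'. apply lookupA_in, in_combine_r in Ha.
      intros xi1 xi2 w1 Hag. rewrite !IHa' by auto. apply D_coinc. intros z Hz.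
      pose proof (fv_subst a s z Hz) as Hf. unfold env.
      destruct (lookup z s) as [a0|] eqn:Hl0.
      * apply functional_extensionality; intros w''. apply (Hs z a0 Hl0). intros; apply Hag; auto.
      * rewrite (Hag z Hf). auto.
Qed.

Lemma C_wf k e : wf_expr defs k e -> Cx e.
Proof. intros Hwf xi xi' w Hag. rewrite <- (subst_nil e).
  rewrite !(Q k e Hwf k (le_n k) []) by (simpl; discriminate).
  apply D_coinc. intros z Hz. unfold env. simpl. rewrite Hag; auto. Qed.
End Sem.

Lemma nth_mid_ne {A} (l1 l2 : list A) a b j dd : j <> length l1 ->
  nth j (l1 ++ a :: l2) dd = nth j (l1 ++ b :: l2) dd.
Proof. intros H. destruct (Nat.lt_ge_cases j (length l1)).
  - rewrite !app_nth1; auto.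
  - rewrite !app_nth2 by auto. destruct (j - length l1) eqn:E; [lia|]. reflexivity. Qed.

Theorem lemma2 (defs : list defn) (Hdefs : wf_defs defs)
  (M : kmodel) (V : (nat -> U M) -> W M -> expr -> U M)
  (HV : is_semantics M defs V)
  (d : nat) (ps : list nat) (body : expr)
  (Hd : nth_error defs d = Some (ps, body))
  (l1 : list expr) (ei : expr) (l2 : list expr)
  (Harity : length (l1 ++ ei :: l2) = length ps)
  (Hleib : leibniz defs d (length l1))
  (Hwf : Forall (wf_expr defs (length defs)) (l1 ++ ei :: l2))
  (xi : nat -> U M) (w : W M) (x : nat)
  (Hx : Forall (fun e => ~ In x (fv e)) (l1 ++ ei :: l2)) :
  V xi w (EDef d (l1 ++ ei :: l2)) =
  V (upd xi x (V xi w ei)) w (EDef d (l1 ++ ERigid x :: l2)).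
Proof.
  destruct (Hdefs d ps body Hd) as (Hnd & Hfvb & Hwfb).
  assert (Har' : length (l1 ++ ERigid x :: l2) = length ps) by (rewrite <- Harity, !length_app; reflexivity).
  rewrite (V_def defs M V HV xi w d ps body _ Hd Harity).
  rewrite (V_def defs M V HV _ w d ps body _ Hd Har').
  rewrite Forall_forall in Hwf, Hx.
  rewrite (Q defs M V HV Hdefs d body Hwfb d (le_n d)).
  2:{ intros y a Hl. rewrite lookup_A in Hl. apply lookupA_in, in_combine_r in Hl.
      apply (C_wf defs M V HV Hdefs (length defs)); apply Hwf; auto. }
  rewrite (Q defs M V HV Hdefs d body Hwfb d (le_n d)).
  2:{ intros y a Hl. rewrite lookup_A in Hl. apply lookupA_in, in_combine_r in Hl.
      apply in_app_or in Hl as [Hl|[<-|Hl]].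
      - apply (C_wf defs M V HV Hdefs (length defs)); apply Hwf; apply in_or_app; eauto.
      - intros xi1 xi2 w1 H. rewrite !(V_rigid defs M V HV). apply H. simpl; auto.
      - apply (C_wf defs M V HV Hdefs (length defs)); apply Hwf; apply in_or_app; right; right; eauto. }
  apply (D_ext defs M d body d). intros z Hz.
  destruct (In_nth ps z 0 (Hfvb z Hz)) as (j & Hj & Hjz).
  unfold env. rewrite !lookup_A, <- Hjz.
  rewrite (lookupA_combine_nodup ps (l1 ++ ei :: l2) j EFalse), (lookupA_combine_nodup ps (l1 ++ ERigid x :: l2) j EFalse) by auto.
  destruct (Nat.eq_dec j (length l1)) as [->|Hne].
  - rewrite !nth_middle. right. split.
    + rewrite (V_rigid defs M V HV). unfold upd. rewrite Nat.eqb_refl. reflexivity.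
    + unfold leibniz in Hleib. destruct (leibF_unfold defs _ _ _ Hleib) as [_ (ps0 & b0 & Hd0 & _ & Hno)].
      rewrite Hd in Hd0. inversion Hd0; subst. exact Hno.
  - left. rewrite <- (nth_mid_ne l1 l2 ei (ERigid x) j EFalse Hne).
    assert (Ha : In (nth j (l1 ++ ei :: l2) EFalse) (l1 ++ ei :: l2)) by (apply nth_In; lia).
    apply functional_extensionality; intros w'.
    apply (C_wf defs M V HV Hdefs _ _ (Hwf _ Ha)). intros z' Hz'. unfold upd.
    destruct (Nat.eqb_spec z' x) as [->|]; auto. exfalso. apply (Hx _ Ha Hz').
Qed.
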